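(* Let $(X,\mathcal{M},\mu)$ and $(Y,\mathcal{N},\nu)$ be measure spaces with non-trivial measures. Let $1\le a<b\le\infty$ and $1\le c<d\le\infty$, and let $U$ be an operator (not necessarily linear) mapping measurable functions on $Y$ to measurable functions on $X$ such that there exist constants $\sigma\in(0,\infty)$ and $C\in(0,\infty)$ with $$\|U[g]\|_p\le C\,\sigma^{1/q-1/p}\,|||g|||_q\qquad\text{for all } g\in L(q,Y),\ p\in(a,b),\ q\in(c,d).$$ Let $\underline{C}$ be the minimal such constant, i.e. $$\underline{C}=\sup_{g:\ |||g|||_q\in(0,\infty)}\ \sup_{p\in(a,b),\,q\in(c,d)}\left\{\sigma^{1/p-1/q}\frac{\|U[g]\|_p}{|||g|||_q}\right\}.$$ Let $\psi\in G\Psi(a,b)$ and $\chi\in G\Psi(c,d)$ be generating functions, with associated Grand Lebesgue Spaces $G\psi$ (of functions on $X$) and $G\chi$ (of functions on $Y$). Then for every $g$, $$\frac{\|U[g]\|_{G\psi}}{\phi_{G\psi}(\sigma^{-1})}\le \underline{C}\cdot\frac{\|g\|_{G\chi}}{\phi_{G\chi}(\sigma^{-1})},$$ and the constant $\underline{C}$ in this inequality is, in the general case, the best possible.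
   Context: For $p\in[1,\infty]$, $\|f\|_p=\left(\int_X|f|^p\,d\mu\right)^{1/p}$ and $|||g|||_q=\left(\int_Y|g|^q\,d\nu\right)^{1/q}$ (usual modification for $\infty$); $L(p,X)$, $L(q,Y)$ are the corresponding Lebesgue–Riesz spaces. For $1\le a<b\le\infty$, $G\Psi(a,b)$ is the set of positive measurable functions $\psi$ on $(a,b)$ (possibly infinite at the endpoints) with $\inf_{p}\psi(p)>0$. The Grand Lebesgue Space $G\psi$ on $X$ consists of measurable $f$ with finite norm $\|f\|_{G\psi}=\sup_{p\in(a,b)}\|f\|_p/\psi(p)$; similarly $G\chi$ on $Y$ has norm $\|g\|_{G\chi}=\sup_{q\in(c,d)}|||g|||_q/\chi(q)$. The fundamental function of $G\psi$ is $\phi_{G\psi}(\delta)=\sup_{p\in(a,b)}\delta^{1/p}/\psi(p)$ for $\delta>0$, and analogously $\phi_{G\chi}(\delta)=\sup_{q\in(c,d)}\delta^{1/q}/\chi(q)$. *)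

(* Defs.v *)
From HB Require Import structures.
From mathcomp Require Import all_boot all_order all_algebra.
From mathcomp Require Import all_classical all_reals all_analysis.
Set Implicit Arguments. Unset Strict Implicit. Unset Printing Implicit Defensive.
Import Order.TTheory GRing.Theory Num.Theory.
Local Open Scope classical_set_scope.
Local Open Scope ring_scope.

Definition expo_dom {R : realType} (a : R) (b : \bar R) : set R :=
  [set p | a < p /\ (p%:E < b)%E].

Definition Lp {d} {T : measurableType d} {R : realType}
  (mu : {measure set T -> \bar R}) (p : R) (f : T -> R) : \bar R :=
  Lnorm mu p%:E (EFin \o f).

Definition GPsi {R : realType} (a : R) (b : \bar R) (psi : R -> R) : Prop :=
  [/\ 1 <= a, (a%:E < b)%E,
      measurable_fun (expo_dom a b) psi,
      (forall p, expo_dom a b p -> 0 < psi p) &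
      exists2 eps : R, 0 < eps & forall p, expo_dom a b p -> eps <= psi p].

Definition GLSnorm {d} {T : measurableType d} {R : realType}
  (mu : {measure set T -> \bar R}) (a : R) (b : \bar R) (psi : R -> R)
  (f : T -> R) : \bar R :=
  ereal_sup [set (Lp mu p f / (psi p)%:E)%E | p in expo_dom a b].

Definition fundfun {R : realType} (a : R) (b : \bar R) (psi : R -> R)
  (delta : R) : \bar R :=
  ereal_sup [set (delta `^ p^-1 / psi p)%:E | p in expo_dom a b].

Definition op_bound {dX dY} {X : measurableType dX} {Y : measurableType dY}
  {R : realType} (mu : {measure set X -> \bar R}) (nu : {measure set Y -> \bar R})
  (a : R) (b : \bar R) (c : R) (d : \bar R) (U : (Y -> R) -> (X -> R))
  (sigma C : R) : Prop :=
  forall (g : Y -> R) (p q : R),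
    measurable_fun setT g -> (Lp nu q g < +oo)%E ->
    expo_dom a b p -> expo_dom c d q ->
    (Lp mu p (U g) <= (C * sigma `^ (q^-1 - p^-1))%:E * Lp nu q g)%E.

Definition Cmin {dX dY} {X : measurableType dX} {Y : measurableType dY}
  {R : realType} (mu : {measure set X -> \bar R}) (nu : {measure set Y -> \bar R})
  (a : R) (b : \bar R) (c : R) (d : \bar R) (U : (Y -> R) -> (X -> R))
  (sigma : R) : \bar R :=
  ereal_sup [set z | exists (g : Y -> R) (p q : R),
 [/\ measurable_fun setT g, (0 < Lp nu q g)%E, (Lp nu q g < +oo)%E,
        expo_dom a b p /\ expo_dom c d q &
        z = ((sigma `^ (p^-1 - q^-1))%:E * (Lp mu p (U g) / Lp nu q g))%E]].

Definition GLS_setting {dX dY} {X : measurableType dX} {Y : measurableType dY}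
  {R : realType} (mu : {measure set X -> \bar R}) (nu : {measure set Y -> \bar R})
  (a : R) (b : \bar R) (c : R) (d : \bar R) (U : (Y -> R) -> (X -> R))
  (sigma : R) (psi chi : R -> R) : Prop :=
  [/\ (0 < mu setT)%E /\ (0 < nu setT)%E,
      GPsi a b psi /\ GPsi c d chi,
      (forall g : Y -> R, measurable_fun setT g -> measurable_fun setT (U g)),
      0 < sigma &
      exists2 C : R, 0 < C & op_bound mu nu a b c d U sigma C].

(* Main.v *)
Require Import Defs.
From HB Require Import structures.
From mathcomp Require Import all_boot all_order all_algebra.
From mathcomp Require Import all_classical all_reals all_analysis.
From mathcomp Require Import lra ring.
Import Order.TTheory GRing.Theory Num.Theory.
Local Open Scope classical_set_scope.
Local Open Scope ring_scope.

Section Aux.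
Context {R : realType}.
Local Open Scope ereal_scope.

Lemma dom_ne (a : R) (b : \bar R) : a%:E < b -> exists p, expo_dom a b p.
Proof.
case: b => [r| |] //= ab.
  rewrite lte_fin in ab.
  exists ((a + r) / 2)%R; split; rewrite ?lte_fin; lra.
by exists (a + 1)%R; split => //; rewrite ?ltry //; lra.
Qed.

Lemma inv_powR (s r : R) : (0 < s)%R -> ((s^-1) `^ r = (s `^ r)^-1)%R.
Proof.
move=> s0; rewrite -powR_inv1 ?ltW // -powRrM mulN1r powRN //.
Qed.

Lemma fin_le (x : \bar R) (r : R) : 0 <= x -> x <= r%:E ->
  exists m : R, x = m%:E /\ (0 <= m)%R /\ (m <= r)%R.
Proof.
case: x => [m| |] //=; rewrite !lee_fin => m0 mr; by exists m.
Qed.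

Lemma div_le (x : \bar R) (r G : R) : (0 < r)%R -> 0 <= x -> x / r%:E <= G%:E ->
  exists n, x = n%:E /\ (0 <= n)%R /\ (n <= r * G)%R.
Proof.
move=> r0 x0; rewrite inver gt_eqF //.
case: x x0 => [n| |] //=.
  rewrite -EFinM !lee_fin => n0 h; exists n; split => //; split => //.
  by rewrite mulrC -ler_pdivrMr.
by move=> _; rewrite gt0_mulye ?lte_fin ?invr_gt0.
Qed.

Lemma EFin_div (m n : R) : (n != 0)%R -> m%:E / n%:E = (m / n)%:E.
Proof. by move=> n0; rewrite inver (negbTE n0) -EFinM. Qed.

Lemma alg1 (sp sq m n K : R) : (0 < sp)%R -> (0 < sq)%R -> (0 < n)%R ->
  ((sp / sq) * (m / n) <= K)%R = (m * sp <= K * sq * n)%R.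
Proof.
move=> sp0 sq0 n0.
have -> : ((sp / sq) * (m / n) = (m * sp) / (sq * n))%R.
  by field; apply/andP; split; rewrite gt_eqF.
by rewrite ler_pdivrMr ?mulr_gt0 // mulrA.
Qed.

Lemma alg2 (sp sq m n C : R) : (0 < sp)%R ->
  (m <= C * (sq / sp) * n)%R = (m * sp <= C * sq * n)%R.
Proof.
move=> sp0.
have -> : (C * (sq / sp) * n = (C * sq * n) / sp)%R.
  by field; rewrite gt_eqF.
by rewrite ler_pdivlMr.
Qed.

Lemma alg3 (sq chi Y K G : R) : (0 < sq)%R -> (0 < chi)%R -> (0 < Y)%R ->
  (Y <= K * sq * chi * G)%R -> (sq^-1 / chi <= K * G / Y)%R.
Proof.
move=> sq0 c0 Y0 h.
rewrite ler_pdivlMr //.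
have -> : (sq^-1 / chi * Y = Y / (sq * chi))%R.
  by field; apply/andP; split; rewrite gt_eqF.
rewrite ler_pdivrMr ?mulr_gt0 //.
by rewrite (le_trans h) // le_eqVlt; apply/orP; left; apply/eqP; ring.
Qed.

Lemma powRB' (s x y : R) : (0 < s)%R -> (s `^ (x - y) = s `^ x / s `^ y)%R.
Proof. move=> s0; apply: powRB; apply/implyP => _; exact: lt0r_neq0. Qed.

End Aux.

Section Part1.
Context {R : realType}.
Local Open Scope ereal_scope.

Lemma Lp_ge0 {d} {T : measurableType d} (mu : {measure set T -> \bar R}) p f :
  0 <= Lp mu p f.
Proof. rewrite /Lp; exact: Lnorm_ge0. Qed.

Lemma fin_lt (x : \bar R) : 0 <= x -> x < +oo -> exists n : R, x = n%:E /\ (0 <= n)%R.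
Proof. by case: x => [n| |] //=; rewrite lee_fin => n0 _; exists n. Qed.

Lemma part1 (dX dY : measure_display) (X : measurableType dX) (Y : measurableType dY)
     (mu : {measure set X -> \bar R}) (nu : {measure set Y -> \bar R})
     (a : R) (b : \bar R) (c : R) (d : \bar R) (U : (Y -> R) -> (X -> R))
     (sigma : R) (psi chi : R -> R) :
     GLS_setting mu nu a b c d U sigma psi chi ->
     forall g : Y -> R, measurable_fun setT g -> (GLSnorm nu c d chi g < +oo)%E ->
     (GLSnorm mu a b psi (U g) / fundfun a b psi sigma^-1
       <= Cmin mu nu a b c d U sigma * (GLSnorm nu c d chi g / fundfun c d chi sigma^-1))%E.
Proof.
move=> [[mu0 nu0] [[a1 ab mpsi psi0 _] [c1 cd mchi chi0 _]] mU s0 [C C0 HC]] g mg Gfin.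
have [p0 p0d] := dom_ne _ _ ab; have [q0 q0d] := dom_ne _ _ cd.
have Lpd q : expo_dom c d q -> Lp nu q g / (chi q)%:E <= GLSnorm nu c d chi g.
  by move=> qd; apply: ereal_sup_ubound; exists q.
have Gc0 : 0 <= GLSnorm nu c d chi g.
  apply: le_trans (Lpd _ q0d); apply: mule_ge0; first exact: Lp_ge0.
  by rewrite inve_ge0 lee_fin ltW //; exact: chi0.
set G := fine (GLSnorm nu c d chi g).
have GcE : GLSnorm nu c d chi g = G%:E by rewrite /G fineK // ge0_fin_numE.
have G0 : (0 <= G)%R by rewrite -lee_fin -GcE.
have nq q : expo_dom c d q -> exists n, Lp nu q g = n%:E /\ (0 <= n)%R /\ (n <= chi q * G)%R.
  move=> qd; apply: div_le; [exact: chi0 | exact: Lp_ge0 | rewrite -GcE; exact: Lpd].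
have mp p : expo_dom a b p -> exists m, Lp mu p (U g) = m%:E /\ (0 <= m)%R.
  move=> pd; have [n [nE [n0 _]]] := nq _ q0d.
  have h := HC g p q0 mg (ltac:(by rewrite nE ltry)) pd q0d.
  rewrite nE -EFinM in h.
  have [m [mE [m0 _]]] := fin_le _ _ (Lp_ge0 _ _ _) h; by exists m.
have sp0 (p : R) : (0 < sigma `^ p)%R by apply: powR_gt0.
have psiel p : expo_dom a b p -> 0 <= Lp mu p (U g) / (psi p)%:E.
  move=> pd; apply: mule_ge0; first exact: Lp_ge0.
  by rewrite inve_ge0 lee_fin ltW //; exact: psi0.
move: G0; rewrite le_eqVlt => /orP [/eqP G00 | Gpos].
  have Gpsi0 : GLSnorm mu a b psi (U g) = 0.
    apply/eqP; rewrite eq_le; apply/andP; split; last first.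
      by apply: le_trans (psiel _ p0d) _; apply: ereal_sup_ubound; exists p0.
    apply: ge_ereal_sup => _ [p pd <-].
    have [n [nE [n0 nle]]] := nq _ q0d.
    have h := HC g p q0 mg (ltac:(by rewrite nE ltry)) pd q0d.
    have n00 : n = 0%R by apply/le_anti; rewrite n0 -G00 mulr0 in nle *; rewrite nle.
    rewrite nE n00 mule0 in h.
    have -> : Lp mu p (U g) = 0 by apply/le_anti; rewrite h Lp_ge0.
    by rewrite mul0e.
  by rewrite Gpsi0 mul0e GcE -G00 mul0e mule0.
have [q1 [q1d nq1pos]] : exists q, expo_dom c d q /\ 0 < Lp nu q g.
  apply: contrapT => hn.
  have : GLSnorm nu c d chi g <= 0.
    apply: ge_ereal_sup => _ [q qd <-].
    have : Lp nu q g <= 0 by rewrite leNgt; apply/negP => h; apply: hn; exists q.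
    move=> h; have -> : Lp nu q g = 0 by apply/le_anti; rewrite h Lp_ge0.
    by rewrite mul0e.
  by rewrite GcE lee_fin => h; move: Gpos; rewrite ltNge h.
have CminE : exists k, Cmin mu nu a b c d U sigma = k%:E /\ (0 <= k)%R /\ (k <= C)%R.
  apply: fin_le.
    have [n1 [n1E _]] := nq _ q1d.
    apply: (@le_trans _ _ ((sigma `^ (p0^-1 - q1^-1))%:E * (Lp mu p0 (U g) / Lp nu q1 g))); last first.
      by apply: ereal_sup_ubound; exists g, p0, q1; split => //; rewrite n1E ltry.
    apply: mule_ge0; first by rewrite lee_fin powR_ge0.
    by apply: mule_ge0; [exact: Lp_ge0 | rewrite inve_ge0; exact: Lp_ge0].
  apply: ge_ereal_sup => z [g' [p [q [mg' pos fin [pd qd] ->]]]].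
  have h := HC g' p q mg' fin pd qd.
  have [n' [nE n0]] := fin_lt _ (Lp_ge0 _ _ _) fin.
  rewrite nE -EFinM in h.
  have [m' [mE [m0 _]]] := fin_le _ _ (Lp_ge0 _ _ _) h.
  rewrite nE lte_fin in pos.
  rewrite mE nE EFin_div ?gt_eqF // -EFinM lee_fin.
  rewrite !powRB' // in h *.
  rewrite alg1 //; rewrite mE lee_fin alg2 // in h.
move: CminE => [k [CE [k0 kC]]]; rewrite CE.
have key p q m : expo_dom a b p -> expo_dom c d q -> Lp mu p (U g) = m%:E ->
    (m * sigma `^ p^-1 <= k * sigma `^ q^-1 * chi q * G)%R.
  move=> pd qd mE; have [n [nE [n0 nle]]] := nq _ qd.
  have h1 : (m * sigma `^ p^-1 <= k * sigma `^ q^-1 * n)%R.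
    move: n0; rewrite le_eqVlt => /orP [/eqP n00 | npos].
      have h := HC g p q mg (ltac:(by rewrite nE ltry)) pd qd.
      rewrite mE nE -n00 mule0 lee_fin in h.
      by rewrite -n00 mulr0 mulr_le0_ge0 ?powR_ge0.
    have : (sigma `^ (p^-1 - q^-1))%:E * (Lp mu p (U g) / Lp nu q g) <= k%:E.
      rewrite -CE; apply: ereal_sup_ubound; exists g, p, q; split => //.
      by rewrite nE lte_fin. by rewrite nE ltry.
    rewrite mE nE EFin_div ?gt_eqF // -EFinM lee_fin powRB' // alg1 //.
  apply: le_trans h1 _; rewrite -!mulrA; apply: ler_wpM2l => //.
  by apply: ler_wpM2l; [exact: powR_ge0 | exact: nle].
have chiel q : expo_dom c d q -> (0 < (sigma^-1) `^ q^-1 / chi q)%R.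
  by move=> qd; rewrite divr_gt0 ?powR_gt0 ?invr_gt0 ?chi0.
have Fge : ((sigma^-1) `^ q0^-1 / chi q0)%:E <= fundfun c d chi sigma^-1.
  by apply: ereal_sup_ubound; exists q0.
have Pge : ((sigma^-1) `^ p0^-1 / psi p0)%:E <= fundfun a b psi sigma^-1.
  by apply: ereal_sup_ubound; exists p0.
have RHS0 : 0 <= k%:E * (G%:E / fundfun c d chi sigma^-1).
  apply: mule_ge0; first by rewrite lee_fin.
  apply: mule_ge0; first by rewrite lee_fin ltW.
  rewrite inve_ge0; apply: le_trans Fge; rewrite lee_fin ltW //; exact: chiel.
have Fle p m : expo_dom a b p -> Lp mu p (U g) = m%:E -> (0 < m)%R ->
    fundfun c d chi sigma^-1 <= (k * G / (m * sigma `^ p^-1))%:E.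
  move=> pd mE mpos.
  apply: ge_ereal_sup => _ [q qd <-]; rewrite lee_fin inv_powR //.
  apply: alg3 => //; [exact: chi0 | by rewrite mulr_gt0 | exact: key].
have [[p1 [p1d mpos]] | hall] := pselect (exists p, expo_dom a b p /\ 0 < Lp mu p (U g)); last first.
  rewrite GcE; apply: le_trans RHS0.
  apply: mule_le0_ge0; last first.
    rewrite inve_ge0; apply: le_trans Pge; rewrite lee_fin ltW //.
    by rewrite divr_gt0 ?powR_gt0 ?invr_gt0 ?psi0.
  apply: ge_ereal_sup => _ [p pd <-].
  have : Lp mu p (U g) <= 0 by rewrite leNgt; apply/negP => h; apply: hall; exists p.
  move=> h; have -> : Lp mu p (U g) = 0 by apply/le_anti; rewrite h Lp_ge0.
  by rewrite mul0e.
have [m1 [m1E m10]] := mp _ p1d.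
rewrite m1E lte_fin in mpos.
have Fle1 := Fle _ _ p1d m1E mpos.
have Fge0 : 0 <= fundfun c d chi sigma^-1.
  by apply: le_trans Fge; rewrite lee_fin ltW // chiel.
have [F' [FE [F0 _]]] := fin_le _ _ Fge0 Fle1.
have F'pos : (0 < F')%R by rewrite -lte_fin -FE; apply: lt_le_trans Fge; rewrite lte_fin chiel.
have Ppos : 0 < fundfun a b psi sigma^-1.
  by apply: lt_le_trans Pge; rewrite lte_fin divr_gt0 ?powR_gt0 ?invr_gt0 ?psi0.
case PE: (fundfun a b psi sigma^-1) Ppos => [P'| |] //= P'pos; last first.
  by rewrite invey mule0 GcE.
rewrite lte_fin in P'pos.
have bnd p : expo_dom a b p -> Lp mu p (U g) / (psi p)%:E <= (k * G / F' * P')%:E.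
  move=> pd; have [m [mE m0]] := mp _ pd.
  have psp : (0 < psi p)%R by exact: psi0.
  rewrite mE EFin_div ?gt_eqF // lee_fin.
  have h1 : (m * sigma `^ p^-1 <= k * G / F')%R.
    move: m0; rewrite le_eqVlt => /orP [/eqP <- | mpos'].
      by rewrite mul0r divr_ge0 ?mulr_ge0 // ltW.
    have := Fle _ _ pd mE mpos'; rewrite FE lee_fin => h.
    rewrite ler_pdivlMr // mulrC -ler_pdivlMr // mulr_gt0 //.
  have h2 : ((sigma `^ p^-1)^-1 / psi p <= P')%R.
    rewrite -lee_fin -PE -inv_powR //; apply: ereal_sup_ubound; exists p => //.
  have -> : (m / psi p = (m * sigma `^ p^-1) * ((sigma `^ p^-1)^-1 / psi p))%R.
    by field; apply/andP; split; rewrite gt_eqF.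
  apply: ler_pM => //; first by rewrite mulr_ge0 ?powR_ge0.
  by rewrite divr_ge0 ?invr_ge0 ?powR_ge0 // ltW.
have GpsiLe : GLSnorm mu a b psi (U g) <= (k * G / F' * P')%:E.
  by apply: ge_ereal_sup => _ [p pd <-]; exact: bnd.
rewrite GcE FE EFin_div ?gt_eqF // -EFinM inver gt_eqF //.
apply: le_trans (lee_wpmul2r _ GpsiLe) _; first by rewrite lee_fin invr_ge0 ltW.
rewrite -EFinM lee_fin le_eqVlt; apply/orP; left; apply/eqP.
by field; apply/andP; split; rewrite gt_eqF.
Qed.

End Part1.

Section Part2.
Context {R : realType}.
Local Open Scope ereal_scope.

Definition dtt : {measure set unit -> \bar R} := \d_tt.

Lemma Lp_dirac (p : R) (f : unit -> R) : (0 < p)%R -> Lp dtt p f = (`|f tt|)%:E.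
Proof.
move=> p0; rewrite /Lp unlock /= /dtt.
rewrite integral_dirac; last by move=> *; exact: I.
rewrite diracE in_setT mul1e /=.
  by rewrite -powRrM mulfV ?gt_eqF // powRr1.
by [].
Qed.

Lemma dom1 {p} : expo_dom (1%R : R) +oo p -> (0 < p)%R.
Proof. by move=> [p1 _]; apply: lt_trans p1. Qed.

Lemma dom2 : expo_dom (1%R : R) +oo 2%R.
Proof. by split; [rewrite ltr1n | rewrite ltry]. Qed.

Lemma GLS_dirac (f : unit -> R) :
  GLSnorm dtt 1%R +oo (fun=> 1%R) f = (`|f tt|)%:E.
Proof.
apply/le_anti/andP; split.
  apply: ge_ereal_sup => _ [p pd <-].
  by rewrite /= (Lp_dirac _ _ (dom1 pd)) inve1 mule1.
apply: (@le_trans _ _ (Lp dtt 2%R f / 1%:E)).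
  by rewrite Lp_dirac // inve1 mule1.
by apply: ereal_sup_ubound; exists 2%R => //; exact: dom2.
Qed.

Lemma fund_one : fundfun (1%R : R) +oo (fun=> 1%R) 1^-1 = 1%:E.
Proof.
apply/le_anti/andP; split.
  by apply: ge_ereal_sup => _ [p pd <-]; rewrite /= invr1 powR1 mulr1.
apply: (@le_trans _ _ ((1^-1 `^ 2^-1 / 1)%:E)).
  by rewrite invr1 powR1 mulr1.
by apply: ereal_sup_ubound; exists 2%R => //; exact: dom2.
Qed.

Lemma GPsi_one : GPsi (1%R : R) +oo (fun=> 1%R).
Proof.
split => //; first by rewrite ltry.
by exists 1%R.
Qed.

Lemma setting_ex : GLS_setting dtt dtt 1%R +oo 1%R +oo (fun g => g) 1%R (fun=> 1%R) (fun=> 1%R).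
Proof.
split => //.
- by split; rewrite /dtt /= /dirac indicE in_setT lte01.
- by split; exact: GPsi_one.
- exists 1%R => // g p q mg fin pd qd.
  by rewrite (Lp_dirac _ _ (dom1 pd)) (Lp_dirac _ _ (dom1 qd)) powR1 mul1r mul1e.
Qed.

Lemma Cmin_ex : Cmin dtt dtt 1%R +oo 1%R +oo (fun g => g) 1%R = 1%:E.
Proof.
apply/le_anti/andP; split.
  apply: ge_ereal_sup => z [g [p [q [_ pos fin [pd qd] ->]]]].
  rewrite (Lp_dirac _ _ (dom1 pd)) (Lp_dirac _ _ (dom1 qd)) in pos *.
  rewrite lte_fin in pos.
  by rewrite powR1 EFin_div ?gt_eqF // divff ?gt_eqF // mul1e.
apply: ereal_sup_ubound; exists (fun=> 1%R), 2%R, 2%R; split.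
- exact: measurable_cst.
- by rewrite Lp_dirac // normr1 lte_fin ltr01.
- by rewrite Lp_dirac // ltry.
- by split; exact: dom2.
- by rewrite !Lp_dirac // normr1 powR1 EFin_div ?oner_neq0 // divr1 mul1e.
Qed.

End Part2.

Theorem mainTheorem1 (R : realType) :
  (forall (dX dY : measure_display) (X : measurableType dX) (Y : measurableType dY)
     (mu : {measure set X -> \bar R}) (nu : {measure set Y -> \bar R})
     (a : R) (b : \bar R) (c : R) (d : \bar R) (U : (Y -> R) -> (X -> R))
     (sigma : R) (psi chi : R -> R),
     GLS_setting mu nu a b c d U sigma psi chi ->
     forall g : Y -> R, measurable_fun setT g -> (GLSnorm nu c d chi g < +oo)%E ->
     (GLSnorm mu a b psi (U g) / fundfun a b psi sigma^-1
       <= Cmin mu nu a b c d U sigma * (GLSnorm nu c d chi g / fundfun c d chi sigma^-1))%E)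
  /\
  (exists (dX dY : measure_display) (X : measurableType dX) (Y : measurableType dY)
     (mu : {measure set X -> \bar R}) (nu : {measure set Y -> \bar R})
     (a : R) (b : \bar R) (c : R) (d : \bar R) (U : (Y -> R) -> (X -> R))
     (sigma : R) (psi chi : R -> R),
     GLS_setting mu nu a b c d U sigma psi chi /\
     (0 < Cmin mu nu a b c d U sigma)%E /\
     exists g : Y -> R,
       [/\ measurable_fun setT g, (0 < GLSnorm nu c d chi g)%E,
           (GLSnorm nu c d chi g < +oo)%E &
           (GLSnorm mu a b psi (U g) / fundfun a b psi sigma^-1
             = Cmin mu nu a b c d U sigma * (GLSnorm nu c d chi g / fundfun c d chi sigma^-1))%E]).
Proof.
split; first exact: part1.
exists default_measure_display, default_measure_display, unit, unit, dtt, dtt,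
  1%R, +oo%E, 1%R, +oo%E, (fun g => g), 1%R, (fun=> 1%R), (fun=> 1%R).
split; first exact: setting_ex.
split; first by rewrite Cmin_ex lte_fin ltr01.
exists (fun=> 1%R); split.
- exact: measurable_cst.
- by rewrite GLS_dirac normr1 lte_fin ltr01.
- by rewrite GLS_dirac ltry.
- by rewrite GLS_dirac Cmin_ex fund_one normr1 mul1e mul1e.
Qed.
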